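(* Let $(a_n)_{n\ge 0}$ be the sequence of real numbers defined by $a_0=a_1=0$, $a_2=1$ and, for $n\ge 3$, \[ a_n \;=\; \tfrac{19}{12}(n+1)-3 \;+\; \frac{6}{n^2(n-1)}\sum_{p=1}^{n}(p-1)(n-p)\,a_{p-1}. \] Then for all $n\ge 4$, \[ a_n \;=\; \tfrac{19}{6}n-\tfrac{37}{5}H_n+\tfrac{1183}{100}-\tfrac{37}{5}\,\frac{H_n}{n}-\tfrac{71}{300}\,\frac1n , \] and in particular $a_n\sim \tfrac{19}{6}n$ as $n\to\infty$.
   Context: $H_n=\sum_{k=1}^n 1/k$ denotes the $n$-th harmonic number. (In the paper, $a_n=\mathbb E[C_n]$ is the expected number of key comparisons made by Quickselect using Yaroslavskiy's dual-pivot partitioning when searching for a uniformly random rank in a uniformly random permutation of $n$ distinct keys; $\tfrac{19}{12}(n+1)-3$ is the expected number of comparisons of one partitioning step.) *)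

(* Defs.v *)
From Stdlib Require Import Reals.
Open Scope R_scope.

Fixpoint harm (n : nat) : R :=
  match n with
  | O => 0
  | S m => harm m + / INR (S m)
  end.

Definition quickselect_rec (a : nat -> R) : Prop :=
  a 0%nat = 0 /\ a 1%nat = 0 /\ a 2%nat = 1 /\
  forall n : nat, (3 <= n)%nat ->
    a n = 19 / 12 * (INR n + 1) - 3
          + 6 / (INR n ^ 2 * (INR n - 1))
            * sum_f 1 n (fun p => (INR p - 1) * (INR n - INR p) * a (p - 1)%nat).

(* Main.v *)
Require Import Defs.
From Stdlib Require Import Reals Lra Lia.
From Coquelicot Require Import Coquelicot.
Open Scope R_scope.

Definition U (a : nat -> R) (m : nat) : R :=
  sum_f_R0 (fun x => INR x * (INR m - INR x) * a x) m.

Lemma U_S a m : U a (S m) = U a m + sum_f_R0 (fun x => INR x * a x) m.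
Proof.
  unfold U. rewrite tech5. rewrite Rminus_diag, Rmult_0_r, Rmult_0_l, Rplus_0_r.
  rewrite <- plus_sum. apply sum_eq. intros i _. rewrite S_INR. ring.
Qed.

Lemma U_2 a m : U a (S (S m)) - 2 * U a (S m) + U a m = INR (S m) * a (S m).
Proof.
  rewrite !U_S. rewrite tech5. ring.
Qed.

Lemma S_is_U a n : sum_f 1 (S n) (fun p => (INR p - 1) * (INR (S n) - INR p) * a (p - 1)%nat)
  = U a n.
Proof.
  unfold sum_f, U. replace (S n - 1)%nat with n by lia.
  apply sum_eq. intros i _. replace (i + 1 - 1)%nat with i by lia.
  rewrite plus_INR, !S_INR. simpl. ring.
Qed.

Lemma harmS n : harm (S n) = harm n + / INR (S n).
Proof. reflexivity. Qed.

Definition g (n : nat) : R := 19 / 6 * INR n - 37 / 5 * harm n + 1183 / 100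
           - 37 / 5 * (harm n / INR n) - 71 / 300 * (1 / INR n).

Definition cc (n : nat) : R := 19 / 12 * (INR n + 1) - 3.

Lemma T_eq a (ha : quickselect_rec a) n : (2 <= n)%nat ->
  (a (S n) - cc (S n)) * (INR (S n) ^ 2 * (INR (S n) - 1)) / 6 = U a n.
Proof.
  intros Hn. destruct ha as (_ & _ & _ & hr).
  rewrite (hr (S n)) by lia. rewrite S_is_U. unfold cc.
  assert (INR n >= 2) by (apply Rle_ge; replace 2 with (INR 2) by (simpl; ring); apply le_INR; lia).
  rewrite S_INR. field. lra.
Qed.

Lemma step a (ha : quickselect_rec a) k : (4 <= k)%nat ->
  a k = g k -> a (S k) = g (S k) -> a (S (S k)) = g (S (S k)).
Proof.
  intros Hk H0 H1.
  destruct k as [|k]; [lia|].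
  pose proof (U_2 a k) as E.
  rewrite <- (T_eq a ha (S (S k))), <- (T_eq a ha (S k)), <- (T_eq a ha k) in E by lia.
  rewrite H0, H1 in E.
  unfold g, cc in *. rewrite ?harmS in *.
  assert (INR k >= 3) by (apply Rle_ge; replace 3 with (INR 3) by (simpl; ring); apply le_INR; lia).
  rewrite !S_INR in *.
  set (h := harm k) in *. set (x := INR k) in *.
  set (a3 := a (S (S (S k)))) in *.
  set (D := (x+1+1+1)^2*(x+1+1+1-1)) in *.
  assert (HD : D > 0) by (unfold D; apply Rmult_gt_0_compat; nra).
  assert (E' : (a3 - (19 / 12 * (x + 1 + 1 + 1 + 1) - 3)) * D / 6 =
     (x+1) * (19 / 6 * (x + 1) - 37 / 5 * (h + / (x + 1)) + 1183 / 100 -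
       37 / 5 * ((h + / (x + 1)) / (x + 1)) - 71 / 300 * (1 / (x + 1)))
     + 2 * ((19 / 6 * (x + 1 + 1) - 37 / 5 * (h + / (x + 1) + / (x + 1 + 1)) + 1183 / 100 -
     37 / 5 * ((h + / (x + 1) + / (x + 1 + 1)) / (x + 1 + 1)) - 71 / 300 * (1 / (x + 1 + 1)) -
     (19 / 12 * (x + 1 + 1 + 1) - 3)) * ((x + 1 + 1) ^ 2 * (x + 1 + 1 - 1)) / 6)
     - ((19 / 6 * (x + 1) - 37 / 5 * (h + / (x + 1)) + 1183 / 100 - 37 / 5 * ((h + / (x + 1)) / (x + 1)) -
     71 / 300 * (1 / (x + 1)) - (19 / 12 * (x + 1 + 1) - 3)) * ((x + 1) ^ 2 * (x + 1 - 1)) / 6)) by lra.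
  assert (A3 : a3 = (19 / 12 * (x + 1 + 1 + 1 + 1) - 3) + ((a3 - (19 / 12 * (x + 1 + 1 + 1 + 1) - 3)) * D / 6) * 6 / D) by (field; lra).
  rewrite A3, E'. unfold D. field. lra.
Qed.

Lemma harm_sum m : harm (S m) = sum_f_R0 (fun k => / INR (S k)) m.
Proof.
  induction m. simpl. field. rewrite harmS, IHm. simpl sum_f_R0. reflexivity.
Qed.

Lemma hn_lim : is_lim_seq (fun n => harm n / INR n) 0.
Proof.
  apply is_lim_seq_ext_loc with (fun n => sum_f_R0 (fun k => / INR (S k)) (pred n) / INR n).
  - exists 1%nat. intros n Hn. destruct n; [lia|]. simpl pred. rewrite harm_sum. reflexivity.
  - apply is_lim_seq_Reals. apply Cesaro_1. apply is_lim_seq_Reals.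
    apply (is_lim_seq_incr_1 (fun n => / INR n) 0).
    replace (Finite 0) with (Rbar_inv p_infty) by reflexivity.
    apply is_lim_seq_inv. apply is_lim_seq_INR. discriminate.
Qed.

Lemma in_lim : is_lim_seq (fun n => / INR n) 0.
Proof.
  replace (Finite 0) with (Rbar_inv p_infty) by reflexivity.
  apply is_lim_seq_inv. apply is_lim_seq_INR. discriminate.
Qed.

Theorem proposition5p1 (a : nat -> R) (ha : quickselect_rec a) :
  (forall n : nat, (4 <= n)%nat ->
     a n = 19 / 6 * INR n - 37 / 5 * harm n + 1183 / 100
           - 37 / 5 * (harm n / INR n) - 71 / 300 * (1 / INR n))
  /\ Un_cv (fun n => a n / (19 / 6 * INR n)) 1.
Proof.
  assert (main : forall n, (4 <= n)%nat -> a n = g n).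
  { pose proof ha as (h0 & h1 & h2 & hr).
    assert (a3 : a 3%nat = 10/3).
    { rewrite hr by lia. unfold sum_f. simpl. rewrite h0, h1. field. }
    assert (a4 : a 4%nat = g 4).
    { rewrite hr by lia. unfold sum_f, g. simpl. rewrite h0, h1, h2. field. }
    assert (a5 : a 5%nat = g 5).
    { rewrite hr by lia. unfold sum_f, g. simpl. rewrite h0, h1, h2, a3. field. }
    assert (I : forall k, a (4+k)%nat = g (4+k)%nat /\ a (S (4+k)) = g (S (4+k))).
    { induction k. split; assumption.
      destruct IHk as [A B]. split. exact B.
      apply (step a ha (4+k)); [lia|exact A|exact B]. }
    intros n Hn. replace n with (4+(n-4))%nat by lia. apply I. }
  split. { intros n Hn. apply (main n Hn). }
  apply is_lim_seq_Reals.
  apply is_lim_seq_ext_loc with (fun n => 1 + 6/19*(-37/5 * (harm n / INR n) + 1183/100 * / INR n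
     - 37/5 * ((harm n / INR n) * / INR n) - 71/300 * (/ INR n * / INR n))).
  - exists 4%nat. intros n Hn. rewrite (main n Hn). unfold g.
    assert (INR n > 0) by (apply lt_0_INR; lia). field. lra.
  - replace (Finite 1) with (Finite (1 + 6/19*(-37/5 * 0 + 1183/100 * 0
     - 37/5 * (0 * 0) - 71/300 * (0 * 0)))) by (f_equal; ring).
    pose proof hn_lim. pose proof in_lim.
    apply is_lim_seq_plus'. apply is_lim_seq_const.
    apply is_lim_seq_mult'. apply is_lim_seq_const.
    apply is_lim_seq_minus'. apply is_lim_seq_minus'. apply is_lim_seq_plus'.
    apply is_lim_seq_mult'; [apply is_lim_seq_const|auto]. apply is_lim_seq_mult'; [apply is_lim_seq_const|auto].
    apply is_lim_seq_mult'; [apply is_lim_seq_const|apply is_lim_seq_mult'; auto].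
    apply is_lim_seq_mult'; [apply is_lim_seq_const|apply is_lim_seq_mult'; auto].
Qed.
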